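(* Let $p$ be a prime and $G$ a finite group with $p\nmid |G|$. If $G$ acts by isometries on a nondegenerate lattice $L$ with $p\nmid\det(L)$, then $p\nmid \det(L^G)\det(L_G)$.
   Context: $L^G=\{l\in L: g(l)=l\ \forall g\in G\}$ is the invariant sublattice and $L_G=(L^G)^\perp\subset L$ the coinvariant sublattice. *)

(* Defs.v *)
From mathcomp Require Import all_boot all_order all_algebra all_fingroup.
Set Implicit Arguments. Unset Strict Implicit. Unset Printing Implicit Defensive.
Import GRing.Theory Num.Theory.
Local Open Scope ring_scope.

(* A lattice L = Z^n (row vectors 'rV[int]_n) with integral symmetric bilinear
   form b(u,v) = u *m B *m v^T given by a Gram matrix B. *)

Definition bil (n : nat) (B : 'M[int]_n) (u v : 'rV[int]_n) : int :=
  (u *m B *m v^T) 0 0.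

(* G acts on L (on the right, v |-> v *m rho g) by isometries of B. *)
Definition isometric_action (gT : finGroupType) (G : {group gT}) (n : nat)
  (B : 'M[int]_n) (rho : gT -> 'M[int]_n) : Prop :=
  [/\ rho 1%g = 1%:M,
      {in G &, forall x y, rho (x * y)%g = rho x *m rho y} &
      {in G, forall g, rho g *m B *m (rho g)^T = B}].

Definition invariant_sublattice (gT : finGroupType) (G : {group gT}) (n : nat)
  (rho : gT -> 'M[int]_n) (v : 'rV[int]_n) : Prop :=
  forall g, g \in G -> v *m rho g = v.

Definition orth_sublattice (n : nat) (B : 'M[int]_n)
  (S : 'rV[int]_n -> Prop) (v : 'rV[int]_n) : Prop :=
  forall w, S w -> bil B v w = 0.

Definition is_basis (n k : nat) (S : 'rV[int]_n -> Prop) (M : 'M[int]_(k, n)) : Prop :=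
  (forall c : 'rV[int]_k, c *m M = 0 -> c = 0) /\
  (forall v, S v <-> exists c : 'rV[int]_k, v = c *m M).

Definition gram_det (n k : nat) (B : 'M[int]_n) (M : 'M[int]_(k, n)) : int :=
  \det (M *m B *m M^T).

(* Main.v *)
Require Import Defs.
From mathcomp Require Import all_boot all_order all_algebra all_fingroup.
Set Implicit Arguments. Unset Strict Implicit. Unset Printing Implicit Defensive.
Import GRing.Theory Num.Theory.
Local Open Scope ring_scope.

Lemma GL (p : nat) (n k k' : nat) (B : 'M[int]_n) (M : 'M[int]_(k, n)) (A : 'M[int]_(n, k))
  (M' : 'M[int]_(k', n)) (A' : 'M[int]_(n, k')) (m : int) :
  prime p -> ~~ (p%:Z %| m)%Z -> ~~ (p%:Z %| \det B)%Z ->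
  M *m A = m%:M -> A *m M + A' *m M' = m%:M -> M *m B *m M'^T = 0 ->
  ~~ (p%:Z %| \det (M *m B *m M^T))%Z.
Proof.
move=> pp pm pB hMA hdec horth.
have chp := pchar_Fp pp.
pose f : {rmorphism int -> 'F_p} := intr.
have dv z : (p%:Z %| z)%Z = (f z == 0) by rewrite (dvdz_pcharf chp).
rewrite dv -det_map_mx.
apply/negP => /det0P [c c0].
rewrite !map_mxM -map_trmx => hc.
set x := c *m (map_mx f M).
have h1 : x *m (map_mx f B) *m ((map_mx f M))^T = 0 by move: hc; rewrite /x !mulmxA.
have h2 : x *m (map_mx f B) *m ((map_mx f M'))^T = 0.
  by rewrite /x map_trmx -!mulmxA -!map_mxM mulmxA horth map_mx0 mulmx0.
have fm : f m != 0 by rewrite -dv.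
have h3 : x *m (map_mx f B) = 0.
  have : x *m (map_mx f B) *m (map_mx f (m%:M)^T) = 0.
    rewrite -hdec linearD /= !trmx_mul map_mxD !map_mxM !mulmxDr !mulmxA.
    by rewrite -!map_trmx h1 h2 !mul0mx addr0.
  rewrite tr_scalar_mx map_scalar_mx mul_mx_scalar => /eqP.
  by rewrite scalemx_eq0 (negPf fm) /= => /eqP.
have Bu : (map_mx f B) \in unitmx.
  by rewrite unitmxE det_map_mx unitfE -dv.
have x0 : x = 0 by rewrite -(mulmxK Bu x) h3 mul0mx.
have : c *m ((map_mx f M) *m (map_mx f A)) = 0 by rewrite mulmxA -/x x0 mul0mx.
rewrite -map_mxM hMA map_scalar_mx mul_mx_scalar => /eqP.
by rewrite scalemx_eq0 (negPf fm) (negPf c0).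
Qed.

Lemma rows_in n k k' (S : 'rV[int]_n -> Prop) (M : 'M[int]_(k,n)) (X : 'M[int]_(k',n)) :
 (forall v, S v <-> exists c, v = c *m M) -> (forall i, S (row i X)) ->
 exists C : 'M_(k',k), X = C *m M.
Proof.
move=> hS hX.
have [u hu] := fin_all_exists (fun i => proj1 (hS _) (hX i)).
exists (\matrix_i u i); apply/row_matrixP => i.
by rewrite row_mul rowK -hu.
Qed.

Lemma rows_zero n k k' (M : 'M[int]_(k,n)) (Y : 'M[int]_(k',k)) :
  (forall c : 'rV_k, c *m M = 0 -> c = 0) -> Y *m M = 0 -> Y = 0.
Proof.
move=> hind hY; apply/row_matrixP => i; rewrite row0; apply: hind.
by rewrite -row_mul hY row0.
Qed.

Lemma bilC n (B : 'M[int]_n) u v : B^T = B -> bil B u v = bil B v u.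
Proof.
move=> Bs; have h : (u *m B *m v^T)^T = v *m B *m u^T.
  by rewrite !trmx_mul trmxK Bs mulmxA.
by rewrite /bil -h [in RHS]mxE.
Qed.

Lemma mx11P (x y : 'M[int]_1) : x 0 0 = y 0 0 -> x = y.
Proof. by move=> h; apply/matrixP => a b; rewrite !ord1. Qed.

Theorem lemma8p1 (p : nat) (gT : finGroupType) (G : {group gT}) (n : nat)
  (B : 'M[int]_n) (rho : gT -> 'M[int]_n) :
  prime p -> ~~ (p %| #|G|)%N ->
  B^T = B -> \det B != 0 -> ~~ (p%:Z %| \det B)%Z ->
  isometric_action G B rho ->
  forall (k1 k2 : nat) (M1 : 'M[int]_(k1, n)) (M2 : 'M[int]_(k2, n)),
    is_basis (invariant_sublattice G rho) M1 ->
    is_basis (orth_sublattice B (invariant_sublattice G rho)) M2 ->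
    ~~ (p%:Z %| gram_det B M1 * gram_det B M2)%Z.
Proof.
move=> pp pG Bs dB0 pB [rho1 rhoM rhoB] k1 k2 M1 M2 [ind1 sp1] [ind2 sp2].
have Hrow1 i : invariant_sublattice G rho (row i M1).
  by apply/sp1; exists 'e_i; rewrite rowE.
have Hinv1 h : h \in G -> M1 *m rho h = M1.
  by move=> hG; apply/row_matrixP => i; rewrite row_mul; apply: Hrow1.
have Horth x : orth_sublattice B (invariant_sublattice G rho) x <-> x *m B *m M1^T = 0.
  split.
    move=> hx; apply: trmx_inj; rewrite trmx0; apply/row_matrixP => j.
    rewrite row0 !trmx_mul trmxK Bs mulmxA row_mul row_mul; apply: mx11P.
    by rewrite [RHS]mxE -(hx _ (Hrow1 j)) bilC.
  move=> hx w /sp1 [c ->]; by rewrite /bil trmx_mul mulmxA hx mul0mx mxE.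
have O21 : M2 *m B *m M1^T = 0.
  apply/row_matrixP => i; rewrite row0 !row_mul; apply/Horth; apply/sp2.
  by exists 'e_i; rewrite rowE.
have O12 : M1 *m B *m M2^T = 0.
  by apply: trmx_inj; rewrite trmx0 !trmx_mul trmxK Bs mulmxA.
have rhoV g : g \in G -> rho (g^-1)%g *m rho g = 1%:M.
  by move=> gG; rewrite -rhoM ?groupV // mulVg.
have K g : g \in G -> rho g *m B *m M1^T = B *m M1^T.
  move=> gG.
  have e : rho g *m B = B *m (rho (g^-1)%g)^T.
    by rewrite -{2}(rhoB g gG) -!mulmxA -trmx_mul rhoV // trmx1 mulmx1.
  by rewrite e -mulmxA -trmx_mul Hinv1 ?groupV.
pose P := \sum_(g in G) rho g.
pose m : int := #|G|%:R.
have HPh h : h \in G -> P *m rho h = P.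
  move=> hG; rewrite /P mulmx_suml (eq_bigr (fun g => rho (g * h)%g)); last first.
    by move=> g gG; rewrite rhoM.
  by rewrite [RHS](reindex_astabs 'R h) ?astabsR.
have HPB : P *m B *m M1^T = m *: (B *m M1^T).
  rewrite /P !mulmx_suml (eq_bigr (fun=> B *m M1^T)); last by move=> g gG; apply: K.
  by rewrite sumr_const scaler_nat.
have HM1P : M1 *m P = m *: M1.
  rewrite /P mulmx_sumr (eq_bigr (fun=> M1)); last by move=> g gG; apply: Hinv1.
  by rewrite sumr_const scaler_nat.
have [A1 hA1] : exists A1 : 'M_(n, k1), P = A1 *m M1.
  apply: (rows_in sp1) => i h hG; by rewrite -row_mul HPh.
have [A2 hA2] : exists A2 : 'M_(n, k2), m%:M - P = A2 *m M2.
  apply: (rows_in sp2) => i; apply/Horth.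
  by rewrite -!row_mul !mulmxBl HPB -!mulmxA mul_scalar_mx subrr row0.
have hdec : A1 *m M1 + A2 *m M2 = m%:M by rewrite -hA1 -hA2 addrC subrK.
have hMA1 : M1 *m A1 = m%:M.
  apply/eqP; rewrite -subr_eq0; apply/eqP; apply: (rows_zero ind1).
  by rewrite mulmxBl -mulmxA -hA1 HM1P mul_scalar_mx subrr.
have m0 : m != 0 by rewrite /m pnatr_eq0 -lt0n cardG_gt0.
have HM2P : M2 *m P = 0.
  have [C hC] : exists C : 'M_(k2, k1), M2 *m P = C *m M1.
    apply: (rows_in sp1) => i h hG; by rewrite -row_mul -mulmxA HPh.
  have e1 : M2 *m P *m B *m M1^T = 0.
    have : M2 *m (P *m B *m M1^T) = 0 by rewrite HPB -scalemxAr mulmxA O21 scaler0.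
    by rewrite !mulmxA.
  have e2 : M2 *m P *m B *m M2^T = 0.
    by rewrite hC -!mulmxA (mulmxA M1) O12 mulmx0.
  have XB : M2 *m P *m B = 0.
    have : M2 *m P *m B *m (m%:M)^T = 0.
      by rewrite -hdec linearD /= !trmx_mul !mulmxDr !mulmxA e1 e2 !mul0mx addr0.
    rewrite tr_scalar_mx mul_mx_scalar => /eqP.
    by rewrite scalemx_eq0 (negPf m0) /= => /eqP.
  have := congr1 (mulmx ^~ (\adj B)) XB.
  rewrite /= -(mulmxA _ B) mul_mx_adj mul0mx mul_mx_scalar => /eqP.
  by rewrite scalemx_eq0 (negPf dB0) /= => /eqP.
have hMA2 : M2 *m A2 = m%:M.
  apply/eqP; rewrite -subr_eq0; apply/eqP; apply: (rows_zero ind2).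
  rewrite mulmxBl -mulmxA -hA2 mulmxBr HM2P subr0 mul_mx_scalar mul_scalar_mx.
  by rewrite subrr.
have pm : ~~ (p%:Z %| m)%Z by rewrite dvdzE /m natz !absz_nat.
have g1 := GL pp pm pB hMA1 hdec O12.
have g2 := GL pp pm pB hMA2 (etrans (addrC _ _) hdec) O21.
move: g1 g2; rewrite /gram_det !dvdzE abszM !absz_nat Euclid_dvdM //.
by move=> /negPf -> /negPf ->.
Qed.
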